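(* Let $A\in\mathbf{R}^{n\times n}$, $C_i\in\mathbf{R}^{m_i\times n}$ ($i=1,\ldots,N$), $H\in\mathbf{R}^{p\times n}$, and let $\mathcal{L}$ be the Laplacian of a directed graph $\mathbf{G}$ on $N$ nodes. Set $\bar A=I_N\otimes A$, $\bar C=\mathrm{diag}[C_1,\ldots,C_N]$, $\bar H=\mathcal{L}\otimes H$. Suppose the pair $\left(\begin{bmatrix}\bar C\\ \bar H\end{bmatrix},\bar A\right)$ is detectable. Then for every reach $\mathbf{R}_s$ of $\mathbf{G}$: (i) $\bigcap_{i\in\mathbf{R}_s}\mathcal{C}_i=\{0\}$; (ii) $\mathcal{O}_H\cap\mathcal{C}_i=\{0\}$ for all $i\in\mathbf{R}_s$. Here $\mathcal{C}_i$ is the undetectable subspace of $(C_i,A)$ and $\mathcal{O}_H=\bigcap_{l=1}^n\operatorname{Ker}(HA^{l-1})$.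
   Context: Directed graph $\mathbf{G}$ on $\{1,\ldots,N\}$ without self-loops; adjacency matrix $\mathbf{A}=[\mathbf{a}_{ij}]$ with $\mathbf{a}_{ij}=1$ if there is an edge from $j$ to $i$, else $0$; $p_i$ the in-degree of node $i$; Laplacian $\mathcal{L}=\mathrm{diag}[p_1,\ldots,p_N]-\mathbf{A}$. For a vertex $j$, the reachable subgraph $\mathbf{R}(j)$ is the set consisting of $j$ and all nodes reachable from $j$ by a directed path. A reach is a maximal reachable subgraph: $\mathbf{R}=\mathbf{R}(i)$ for some $i$ such that there is no $j\ne i$ with $\mathbf{R}(i)\subsetneq\mathbf{R}(j)$. For a square matrix $F$ with minimal polynomial $\alpha_F=\alpha_F^-\alpha_F^+$ (zeros of $\alpha_F^-$ in the open left half-plane, of $\alpha_F^+$ in the closed right half-plane), the undetectable subspace of $(G,F)$ is $\bigcap_{l=1}^n\operatorname{Ker}(GF^{l-1})\cap\operatorname{Ker}\alpha_F^+(F)$; the pair is detectable iff this subspace is $\{0\}$. *)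

(* Defs.v *)
From mathcomp Require Import all_boot all_algebra.
From mathcomp Require Import reals complex.
Set Implicit Arguments. Unset Strict Implicit. Unset Printing Implicit Defensive.
Import GRing.Theory Num.Theory.
Local Open Scope ring_scope.

(* A directed graph on the nodes 'I_N (nodes 1..N of the paper) is given by a
   relation e, where  e j i  means "there is an edge from j to i". *)

Definition no_self_loops N (e : rel 'I_N) := forall i, ~~ e i i.

Definition adjmx (R : nzRingType) N (e : rel 'I_N) : 'M[R]_N :=
  \matrix_(i, j) (e j i)%:R.

Definition indeg (R : nzRingType) N (e : rel 'I_N) (i : 'I_N) : R :=
  \sum_(j < N) adjmx R e i j.

Definition laplacian (R : nzRingType) N (e : rel 'I_N) : 'M[R]_N :=
  diag_mx (\row_i indeg R e i) - adjmx R e.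

Definition reach_set N (e : rel 'I_N) (j : 'I_N) : {set 'I_N} :=
  [set k | connect e j k].

Definition is_reach_root N (e : rel 'I_N) (i : 'I_N) : Prop :=
  forall j, j != i -> ~~ (reach_set e i \proper reach_set e j).

Definition minpoly_mx (K : fieldType) (n : nat) : 'M[K]_n -> {poly K} :=
  match n as k return 'M[K]_k -> {poly K} with
  | 0 => fun _ => 1
  | k.+1 => fun F => mxminpoly F
  end.

Definition croots (R : rcfType) (p : {poly R[i]}) : seq R[i] :=
  projT1 (closed_field_poly_normal p).

(* alpha_F^+ : the factor of the minimal polynomial of the real matrix F
   whose zeros are those in the closed right half-plane (computed over C). *)
Definition alpha_plus (R : rcfType) n (F : 'M[R]_n) : {poly R[i]} :=
  \prod_(z <- croots (map_poly (real_complex R) (minpoly_mx F)) | 0 <= Re z)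
     ('X - z%:P).

Definition peval_mx (K : nzRingType) n (q : {poly K}) (F : 'M[K]_n) : 'M[K]_n :=
  \sum_(k < size q) q`_k *: F ^+ k.

(* membership of x in the undetectable subspace of (G,F):
   x in  cap_{l=1}^n Ker(G F^{l-1})  cap  Ker alpha_F^+(F)
   (the last kernel is taken for the complexification of F, applied to x). *)
Definition undetectable (R : rcfType) m n (G : 'M[R]_(m, n)) (F : 'M[R]_n)
    (x : 'cV[R]_n) : Prop :=
  (forall l : 'I_n, G *m F ^+ l *m x = 0) /\
  peval_mx (alpha_plus F) (map_mx (real_complex R) F)
    *m map_mx (real_complex R) x = 0.

Definition unobservable (R : nzRingType) p n (H : 'M[R]_(p, n)) (A : 'M[R]_n)
    (x : 'cV[R]_n) : Prop :=
  forall l : 'I_n, H *m A ^+ l *m x = 0.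

Definition detectable (R : rcfType) m n (G : 'M[R]_(m, n)) (F : 'M[R]_n) : Prop :=
  forall x, undetectable G F x -> x = 0.

Definition Abar (R : nzRingType) N n (A : 'M[R]_n) : 'M[R]_(\sum_(i < N) n) :=
  \mxdiag_(i < N) A.

Definition Cbar (R : nzRingType) N n (m : 'I_N -> nat)
    (C : forall i : 'I_N, 'M[R]_(m i, n)) :
    'M[R]_(\sum_(i < N) m i, \sum_(j < N) n) :=
  \mxblock_(i < N, j < N) (if i == j then C i else 0).

Definition Hbar (R : nzRingType) N p n (L : 'M[R]_N) (H : 'M[R]_(p, n)) :
    'M[R]_(\sum_(i < N) p, \sum_(j < N) n) :=
  \mxblock_(i < N, j < N) (L i j *: H).

(* Main.v *)
Require Import Defs.
From mathcomp Require Import all_boot all_algebra.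
From mathcomp Require Import reals complex.
Import GRing.Theory Num.Theory.
Local Open Scope ring_scope.
Set Warnings "-notation-overridden,-ambiguous-paths".
From mathcomp Require Import zify.
Section Graph.
Variables (R : fieldType) (N : nat) (e : rel 'I_N) (s : 'I_N).
Hypothesis hs : is_reach_root e s.
Local Notation L := (laplacian R e).

Lemma lapE i j : L i j = (i == j)%:R * indeg R e i - (e j i)%:R.
Proof. by rewrite /laplacian /adjmx !mxE mulr_natl. Qed.

Lemma lap0 i j : i != j -> ~~ e j i -> L i j = 0.
Proof. by move=> /negbTE ij /negbTE eji; rewrite lapE ij eji mul0r subr0. Qed.

Lemma lap_rowsum i : \sum_j L i j = 0.
Proof.
under eq_bigr do rewrite lapE.
rewrite sumrB (bigD1 i) //= big1 ?addr0 ?eqxx ?mul1r.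
  rewrite /indeg /adjmx; apply/eqP; rewrite subr_eq0; apply/eqP; by apply: eq_bigr => j _; rewrite mxE.
by move=> j; rewrite eq_sym => /negbTE ->; rewrite mul0r.
Qed.

Lemma maxR j : connect e j s -> connect e s j.
Proof.
move=> js; apply/negPn/negP => nsj.
have jns : j != s by apply: contraNneq nsj => ->; rewrite connect0.
move: (hs j jns) => /negP; apply; apply/properP; split.
  apply/subsetP => k; rewrite !inE => sk; exact: connect_trans js sk.
by exists j; rewrite !inE ?connect0.
Qed.

Definition inT j := connect e s j && ~~ connect e j s.

Lemma LT (v : 'cV[R]_N) i : (forall j, ~~ inT j -> v j 0 = 0) -> ~~ inT i ->
  (L *m v) i 0 = 0.
Proof.
move=> hv hi; rewrite mxE big1 // => j _.
case hj: (inT j); last by rewrite hv ?hj // mulr0.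
rewrite lap0 ?mul0r //; first by apply: contraNneq hi => ->; rewrite hj.
apply/negP => eji; move: hj hi; rewrite /inT => /andP[sj njs].
have si: connect e s i by apply: connect_trans sj (connect1 eji).
rewrite si /= negbK => is_.
by move: njs; rewrite (connect_trans (connect1 eji) is_).
Qed.

Definition bv : 'cV[R]_N := \col_j (connect e j s)%:R.
Lemma bvE j k : bv j k = (connect e j s)%:R.
Proof. by rewrite /bv mxE. Qed.

Lemma Lb i : ~~ inT i -> (L *m bv) i 0 = 0.
Proof.
move=> hi; rewrite mxE.
case is_: (connect e i s).
  rewrite -[RHS](lap_rowsum i); apply: eq_bigr => j _; rewrite bvE.
  case js: (connect e j s); first by rewrite mulr1.
  rewrite lap0 ?mul0r //; first by apply: contraFneq js => <-.
  by apply: contraFN js => eji; apply: connect_trans (connect1 eji) is_.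
have nsi: ~~ connect e s i by move: hi; rewrite /inT is_ andbT.
rewrite big1 // => j _; rewrite bvE.
case js: (connect e j s); last by rewrite mulr0.
have sj := maxR _ js.
rewrite lap0 ?mul0r //; first by apply: contraNneq nsi => ->.
by apply: contraNN nsi => eji; apply: connect_trans sj (connect1 eji).
Qed.

Lemma ker_vec : exists c : 'cV[R]_N, [/\ c != 0, L *m c = 0 &
   forall i, ~~ connect e s i -> c i 0 = 0].
Proof.
pose PT : 'M[R]_N := diag_mx (\row_j (inT j)%:R).
pose G := PT *m L *m PT + (1 - PT).
have PTE (M : 'cV[R]_N) i : (PT *m M) i 0 = (inT i)%:R * M i 0.
  by rewrite mul_diag_mx !mxE.
have GE (v : 'cV[R]_N) i : (G *m v) i 0 =
    (inT i)%:R * (L *m (PT *m v)) i 0 + (1 - (inT i)%:R) * v i 0.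
  by rewrite mulmxDl mulmxBl mul1mx -!mulmxA [LHS]mxE [X in _ + X]mxE [X in _ + (_ + X)]mxE !PTE mulrBl mul1r.
have supp (v y : 'cV[R]_N) : G *m v = y -> (forall i, ~~ inT i -> y i 0 = 0) ->
   (forall i, ~~ inT i -> v i 0 = 0) /\ L *m v = y.
  move=> Gv hy.
  have hv : forall i, ~~ inT i -> v i 0 = 0.
    move=> i hi; have := congr1 (fun M : 'cV[R]_N => M i 0) Gv => /=.
    by rewrite GE (negbTE hi) mul0r add0r subr0 mul1r => ->; rewrite hy.
  have PTv : PT *m v = v.
    apply/matrixP => i j; rewrite ord1 PTE.
    by case hi: (inT i); rewrite ?mul1r // hv ?hi // mul0r.
  split => //; apply/matrixP => i j; rewrite ord1.
  case hi: (inT i).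
    have := congr1 (fun M : 'cV[R]_N => M i 0) Gv => /=.
    by rewrite GE hi PTv mul1r subrr mul0r addr0.
  by rewrite LT ?hi // hy ?hi.
case: (boolP (G \in unitmx)) => Gu.
  pose y := L *m bv; pose t := invmx G *m y.
  have [ht Lt] := supp t y (mulKVmx Gu y) (Lb).
  have dE k : (bv - t) k 0 = bv k 0 - t k 0.
    by rewrite [LHS]mxE [X in _ + X]mxE.
  exists (bv - t); split.
  - apply/eqP => /matrixP /(_ s 0); rewrite dE bvE ht ?connect0 ?mxE //.
      by rewrite subr0 => /eqP; rewrite oner_eq0.
    by rewrite /inT connect0 andbF.
  - by rewrite mulmxBr Lt subrr.
  - move=> i nsi; rewrite dE bvE ht; last by rewrite /inT (negbTE nsi).
    case is_: (connect e i s); last by rewrite subr0.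
    by move: nsi; rewrite maxR.
have : \det G^T == 0 by rewrite det_tr; move: Gu; rewrite unitmxE unitfE negbK.
case/det0P => v vn0 vG.
have Gv : G *m v^T = 0 by rewrite -[G]trmxK -trmx_mul vG trmx0.
have [hv Lv] := supp v^T 0 Gv (fun i _ => mxE _ _ _ _).
exists v^T; split => //.
- by rewrite trmx_eq0.
- by move=> i nsi; rewrite hv // /inT (negbTE nsi).
Qed.
End Graph.
Lemma peval_horner (K : comNzRingType) k (F : 'M[K]_k.+1) q :
  peval_mx q F = horner_mx F q.
Proof.
rewrite /horner_mx /horner_morph horner_coef size_map_inj_poly; last 2 first.
- by move=> a b /matrixP /(_ 0 0); rewrite !mxE eqxx !mulr1n.
- by rewrite raddf0.
apply: eq_bigr => i _; rewrite coef_map /= -mul_scalar_mx //.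
Qed.

Lemma minpoly_monic (K : fieldType) D (F : 'M[K]_D) : minpoly_mx F \is monic.
Proof. by case: D F => [|k] F /=; rewrite ?monic1 ?mxminpoly_monic. Qed.

Lemma minpoly_dvdP (K : fieldType) D (F : 'M[K]_D) q :
  (peval_mx q F == 0) = (minpoly_mx F %| q).
Proof.
case: D F => [|k] F /=; first by rewrite dvd1p thinmx0 eqxx.
by rewrite peval_horner; apply/eqP/mxminpoly_minP.
Qed.

Lemma mxexpD (K : comNzRingType) n (A : 'M[K]_n) a b :
  A ^+ a *m A ^+ b = A ^+ (a + b).
Proof. by rewrite exprD mulmxE. Qed.

Lemma ch_ext (K : comNzRingType) n (A : 'M[K]_n) m (G : 'M[K]_(m, n)) (x : 'cV[K]_n) :
  (forall l : 'I_n, G *m A ^+ l *m x = 0) -> forall l, G *m A ^+ l *m x = 0.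
Proof.
case: n A G x => [|k] A G x h l; first by rewrite [x]flatmx0 mulmx0.
elim: l {-2}l (leqnn l) => [|l IH] l'.
  by rewrite leqn0 => /eqP ->; exact: (h ord0).
rewrite leq_eqVlt => /orP[/eqP ->|]; last by rewrite ltnS; exact: IH.
case: (ltnP l.+1 k.+1) => [lt|ge]; first exact: (h (Ordinal lt)).
have CH := Cayley_Hamilton A.
rewrite -peval_horner /peval_mx size_char_poly in CH.
have : G *m A ^+ (l.+1 - k.+1) *m (\sum_(i < k.+2) (char_poly A)`_i *: A ^+ i) *m x = 0.
  by rewrite CH mulmx0 mul0mx.
rewrite big_ord_recr /= mulmxDr mulmxDl.
have -> : (char_poly A)`_k.+1 = 1.
  by move: (char_poly_monic A); rewrite monicE /lead_coef size_char_poly => /eqP.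
rewrite scale1r -[G *m _ *m A ^+ k.+1]mulmxA mxexpD subnK //.
rewrite mulmx_sumr mulmx_suml big1 ?add0r // => i _.
rewrite -scalemxAr -scalemxAl -[G *m _ *m A ^+ i]mulmxA mxexpD IH ?scaler0 //.
have := ltn_ord i; lia.
Qed.

Lemma mulE (K : pzSemiRingType) d (B C : 'M[K]_d) : B * C = B *m C.
Proof. by []. Qed.

Section Block.
Variables (K : comNzRingType) (N n : nat) (A : 'M[K]_n).

Lemma Abar_pow l k (Y : forall i : 'I_N, 'M[K]_(n, k)) :
  (Abar N A) ^+ l *m \mxcol_i Y i = \mxcol_i (A ^+ l *m Y i).
Proof.
elim: l Y => [|l IH] Y.
  by rewrite !expr0 mul1mx; apply: eq_mxcol => i; rewrite mul1mx.
rewrite exprS mulE -mulmxA IH /Abar mul_mxdiag_mxcol.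
by apply: eq_mxcol => i; rewrite mulmxA -mulE -exprS.
Qed.

Lemma mxcolZ k (a : K) (Y : forall i : 'I_N, 'M[K]_(n, k)) :
  a *: \mxcol_i Y i = \mxcol_i (a *: Y i).
Proof. by apply/matrixP => u v; rewrite !mxE. Qed.

Lemma peval_Abar q k (Y : forall i : 'I_N, 'M[K]_(n, k)) :
  peval_mx q (Abar N A) *m \mxcol_i Y i = \mxcol_i (peval_mx q A *m Y i).
Proof.
rewrite /peval_mx mulmx_suml (eq_bigr (fun i : 'I_(size q) =>
   \mxcol_j (q`_i *: (A ^+ i *m Y j)))); last first.
  by move=> i _; rewrite -scalemxAl Abar_pow mxcolZ.
rewrite -mxcol_sum; apply: eq_mxcol => i; rewrite mulmx_suml.
by apply: eq_bigr => j _; rewrite -scalemxAl.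
Qed.
End Block.

Lemma peval_Abar0 (K : comNzRingType) N n (A : 'M[K]_n) q (i0 : 'I_N) :
  (peval_mx q (Abar N A) == 0) = (peval_mx q A == 0).
Proof.
apply/eqP/eqP => h.
  pose Y := fun i : 'I_N => if i == i0 then (1 : 'M[K]_n) else 0.
  have := @peval_Abar _ _ _ A q _ Y; rewrite h mul0mx => /(congr1 (fun M => submxcol M i0)).
  by rewrite mxcolK submxcol0 /Y eqxx mulmx1 => <-.
rewrite -[peval_mx q (Abar N A)]mulmx1 -[1%:M](submxcolK (p_ := fun _ : 'I_N => n)).
by rewrite peval_Abar h; under eq_mxcol do rewrite mul0mx; rewrite mxcol0.
Qed.

Lemma minpoly_Abar (K : fieldType) N n (A : 'M[K]_n) (i0 : 'I_N) :
  minpoly_mx (Abar N A) = minpoly_mx A.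
Proof.
apply/eqP; rewrite -eqp_monic ?minpoly_monic //; apply/andP; split.
  by rewrite -minpoly_dvdP (@peval_Abar0 _ _ _ A _ i0) minpoly_dvdP dvdpp.
by rewrite -minpoly_dvdP -(@peval_Abar0 _ _ _ A _ i0) minpoly_dvdP dvdpp.
Qed.

Lemma map_Abar (K K' : nzRingType) (f : {rmorphism K -> K'}) N n (A : 'M[K]_n) :
  map_mx f (Abar N A) = Abar N (map_mx f A).
Proof.
apply/matrixP => u v; rewrite /Abar /mxdiag /mxblock !mxE.
by case: eqP => _; rewrite ?conform_mx_id !mxE ?rmorph0.
Qed.

Lemma map_mxcol (K K' : nzRingType) (f : {rmorphism K -> K'}) N n k
  (Y : forall i : 'I_N, 'M[K]_(n, k)) :
  map_mx f (\mxcol_i Y i) = \mxcol_i (map_mx f (Y i)).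
Proof. by apply/matrixP => u v; rewrite !mxE. Qed.

Lemma Cbar_mul (K : nzRingType) N n (m : 'I_N -> nat)
    (C : forall i : 'I_N, 'M[K]_(m i, n)) k (Y : forall i : 'I_N, 'M[K]_(n, k)) :
  Cbar C *m \mxcol_j Y j = \mxcol_i (C i *m Y i).
Proof.
rewrite /Cbar mul_mxblock_mxrow; apply: eq_mxcol => i.
rewrite (bigD1 i) //= eqxx big1 ?addr0 // => j /negbTE.
by rewrite eq_sym => ->; rewrite mul0mx.
Qed.

Lemma Hbar_mul (K : nzRingType) N p n (L : 'M[K]_N) (H : 'M[K]_(p, n))
    k (Y : forall i : 'I_N, 'M[K]_(n, k)) :
  Hbar L H *m \mxcol_j Y j = \mxcol_i (\sum_j L i j *: (H *m Y j)).
Proof.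
rewrite /Hbar mul_mxblock_mxrow; apply: eq_mxcol => i.
by apply: eq_bigr => j _; rewrite scalemxAl.
Qed.

Lemma core (R : realType) (n N p : nat) (A : 'M[R]_n)
    (m : 'I_N -> nat) (C : forall i : 'I_N, 'M[R]_(m i, n)) (H : 'M[R]_(p, n))
    (e : rel 'I_N) (c : 'cV[R]_N) (x : 'cV[R]_n) :
  detectable (col_mx (Cbar C) (Hbar (laplacian R e) H)) (Abar N A) ->
  c != 0 ->
  (forall l i, c i 0 != 0 -> C i *m A ^+ l *m x = 0) ->
  (forall l i, (\sum_j laplacian R e i j * c j 0) *: (H *m A ^+ l *m x) = 0) ->
  peval_mx (alpha_plus A) (map_mx (real_complex R) A) *m map_mx (real_complex R) x = 0 ->
  x = 0.
Proof.
move=> det cn0 hC hH ha.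
have [i0 ci0] : exists i0, c i0 0 != 0.
  case: (pickP (fun i => c i 0 != 0)) => [i hi|h]; first by exists i.
  move: cn0; have -> : c = 0 by apply/matrixP => i j; rewrite ord1 mxE; apply/eqP/negbFE; exact: h i.
  by rewrite eqxx.
pose Y := \mxcol_j (c j 0 *: x).
have Y0 : Y = 0.
  apply: det; split.
  - move=> l; rewrite -mulmxA Abar_pow mul_col_mx Cbar_mul Hbar_mul -col_mx0.
    congr col_mx.
      rewrite -(mxcol0 (p_ := m)); apply: eq_mxcol => i.
      rewrite -scalemxAr -scalemxAr mulmxA.
      by case: (eqVneq (c i 0) 0) => [->|/hC ->]; rewrite ?scale0r ?scaler0.
    rewrite -(mxcol0 (p_ := fun _ : 'I_N => p)); apply: eq_mxcol => i.
    apply: etrans (hH l i); rewrite scaler_suml; apply: eq_bigr => j _.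
    by rewrite -scalemxAr -scalemxAr scalerA mulmxA.
  - rewrite /alpha_plus (@minpoly_Abar _ _ _ A i0) -/(alpha_plus A).
    rewrite map_Abar map_mxcol peval_Abar -(mxcol0 (p_ := fun _ : 'I_N => n)).
    by apply: eq_mxcol => i; rewrite map_mxZ -scalemxAr ha scaler0.
have := congr1 (fun M => submxcol M i0) Y0; rewrite mxcolK submxcol0.
by move/eqP; rewrite scaler_eq0 (negbTE ci0) /= => /eqP.
Qed.

Arguments core {R n N p A m C H e c x}.
Arguments ch_ext {K n A m G x}.

Theorem theorem3 (R : realType) (n N p : nat) (A : 'M[R]_n)
    (m : 'I_N -> nat) (C : forall i : 'I_N, 'M[R]_(m i, n)) (H : 'M[R]_(p, n))
    (e : rel 'I_N) :
  no_self_loops e ->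
  detectable (col_mx (Cbar C) (Hbar (laplacian R e) H)) (Abar N A) ->
  forall s : 'I_N, is_reach_root e s ->
    (forall x : 'cV[R]_n,
        (forall i, i \in reach_set e s -> undetectable (C i) A x) -> x = 0) /\
    (forall i, i \in reach_set e s ->
       forall x : 'cV[R]_n, unobservable H A x -> undetectable (C i) A x -> x = 0).
Proof.
move=> _ hdet s hs; split.
  move=> x hx.
  have [c [cn0 Lc supp]] := @ker_vec R N e s hs.
  apply: (core hdet cn0).
  - move=> l i ci; have si : i \in reach_set e s.
      by rewrite inE; apply: contraR ci => /supp ->; rewrite eqxx.
    exact: (ch_ext (hx i si).1).
  - move=> l i; have -> : \sum_j laplacian R e i j * c j 0 = (laplacian R e *m c) i 0.
      by rewrite mxE.
    by rewrite Lc mxE scale0r.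
  - by apply: (hx s _).2; rewrite inE connect0.
move=> i si x hO hU.
apply: (@core _ _ _ _ _ _ _ _ _ (\col_j (j == i)%:R) _ hdet).
- by apply/eqP => /matrixP /(_ i 0); rewrite !mxE eqxx => /eqP; rewrite oner_eq0.
- move=> l j; rewrite mxE; case: (eqVneq j i) => [-> _|]; last by rewrite eqxx.
  exact: (ch_ext hU.1).
- by move=> l j; rewrite (ch_ext hO) scaler0.
- exact: hU.2.
Qed.
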